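(* Let $d\ge2$, $a\ge d$, $d'=1$, $t\ge2$, and fix $n\ne j$ in $[t]$. Let $F_{n,j}$ be the $D\times d$ matrix, $D=\binom{d+1}{2}$, with rows indexed by $\{k_1,k_2\}\in\operatorname{Mult}_2([d])$, columns by $k_3\in[d]$, and entries $y_{n,j}(\{k_1,k_2\},k_3)$. Then there exist at least $\binom{D}{d}-\binom{2d-1}{d}$ linearly independent homogeneous polynomials of degree $d$, each a linear combination of the maximal $d\times d$ minors of $F_{n,j}$, that vanish on the attention variety.
   Context: Setup: $Q,K\in\mathbb R^{a\times d}$, $V\in\mathbb R^{1\times d}$, $A=K^\top Q$, $\varphi_W(X)=VX(X^\top AX)$ for $X=(x_{kn})\in\mathbb R^{d\times t}$. For $\mathcal A\in\operatorname{Mult}_2([d])$ (size-2 multisets on $[d]$), $b\in[d]$, $n\ne j$: $c_{n,j}(\mathcal A,b)$ is the coefficient of $(\prod_{u\in\mathcal A}x_{un})x_{bj}$ in $\varphi_W(X)[1,j]$ and $y_{n,j}(\mathcal A,b)=c_{n,j}(\mathcal A,b)/|\operatorname{Perm}(\mathcal A)|$, $\operatorname{Perm}$ the set of distinct orderings. $\mu$ maps $W=(Q,K,V)$ to all scaled coefficients (ambient coordinates with the same names); the attention variety is the Zariski closure of $\operatorname{im}\mu$. *)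

(* Defs.v *)
From HB Require Import structures.
From mathcomp Require Import all_boot all_order all_algebra.
From mathcomp Require Import mpoly.
From mathcomp Require Import reals.

Set Implicit Arguments.
Unset Strict Implicit.
Unset Printing Implicit Defensive.

Import Order.TTheory GRing.Theory Num.Theory.
Local Open Scope ring_scope.

(* Size-2 multisets on [d] = {0,...,d-1}: unordered pairs {k1,k2} encoded as
   ordered pairs with k1 <= k2. *)
Definition M2 (d : nat) := {p : 'I_d * 'I_d | (p.1 <= p.2)%N}.
HB.instance Definition _ d := Finite.on (M2 d).

(* |Perm(A)| : number of distinct orderings of the multiset A *)
Definition permsz d (m : M2 d) : nat :=
  if (val m).1 == (val m).2 then 1%N else 2%N.

Definition Xmat (R : nzRingType) (d t : nat) : 'M[{mpoly R[d * t]}]_(d, t) :=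
  \matrix_(k < d, n < t) 'X_(mxvec_index k n).

Definition phiW (R : comNzRingType) (a d t : nat) (Q K : 'M[R]_(a, d))
    (V : 'rV[R]_d) : 'M[{mpoly R[d * t]}]_(1, t) :=
  let A := K^T *m Q in
  let C := fun (m n : nat) (M : 'M[R]_(m, n)) => map_mx (fun x => x%:MP) M in
  (C _ _ V *m Xmat R d t) *m (((Xmat R d t)^T *m C _ _ A) *m Xmat R d t).

Definition monAbj d t (m : M2 d) (b : 'I_d) (n j : 'I_t) : 'X_{1.. d * t} :=
  (U_(mxvec_index (val m).1 n) + U_(mxvec_index (val m).2 n)
    + U_(mxvec_index b j))%MM.

Definition coef_c (R : comNzRingType) (a d t : nat) (Q K : 'M[R]_(a, d))
    (V : 'rV[R]_d) (n j : 'I_t) (m : M2 d) (b : 'I_d) : R :=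
  (@phiW R a d t Q K V 0 j)@_(monAbj m b n j).

Definition coef_y (R : fieldType) (a d t : nat) (Q K : 'M[R]_(a, d))
    (V : 'rV[R]_d) (n j : 'I_t) (m : M2 d) (b : 'I_d) : R :=
  @coef_c R a d t Q K V n j m b / (permsz m)%:R.

(* Ambient coordinates: y_{n,j}(A,b) for n != j in [t], A in Mult_2([d]),
   b in [d]. *)
Definition Idx (t d : nat) :=
  {x : ('I_t * 'I_t) * (M2 d * 'I_d) | x.1.1 != x.1.2}.
HB.instance Definition _ t d := Finite.on (Idx t d).

Definition NV (t d : nat) : nat := #|{: Idx t d}|.

Definition ycoord (R : nzRingType) (t d : nat) (i : Idx t d)
  : {mpoly R[NV t d]} := 'X_(enum_rank i).

Definition mu (R : fieldType) (a d t : nat) (Q K : 'M[R]_(a, d))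
    (V : 'rV[R]_d) : 'I_(NV t d) -> R :=
  fun v => let i := val (enum_val v) in
           @coef_y R a d t Q K V i.1.1 i.1.2 i.2.1 i.2.2.

(* The attention variety: Zariski closure of im mu, i.e. the common zero set
   of all polynomials vanishing on im mu. *)
Definition attention_variety (R : fieldType) (a d t : nat)
    (z : 'I_(NV t d) -> R) : Prop :=
  forall p : {mpoly R[NV t d]},
    (forall (Q K : 'M[R]_(a, d)) (V : 'rV[R]_d), p.@[@mu R a d t Q K V] = 0) ->
    p.@[z] = 0.

Definition vanishes_on_attention_variety (R : fieldType) (a d t : nat)
    (p : {mpoly R[NV t d]}) : Prop :=
  forall z, attention_variety a z -> p.@[z] = 0.

Definition Fnj (R : nzRingType) (t d : nat) (n j : 'I_t) (hnj : n != j)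
  : 'M[{mpoly R[NV t d]}]_(#|{: M2 d}|, d) :=
  \matrix_(r, k) ycoord R (Sub ((n, j), (enum_val r, k)) hnj : Idx t d).

(* Maximal (d x d) minors: determinants of the submatrices on a strictly
   increasing choice of d rows. *)
Definition incr_rows (d D : nat) (f : {ffun 'I_d -> 'I_D}) : bool :=
  [forall i1 : 'I_d, forall i2 : 'I_d, (i1 < i2)%N ==> (f i1 < f i2)%N].

Definition in_span_of_max_minors (R : comNzRingType) (t d : nat) (n j : 'I_t)
    (hnj : n != j) (p : {mpoly R[NV t d]}) : Prop :=
  exists c : {ffun 'I_d -> 'I_#|{: M2 d}|} -> R,
    p = \sum_(f | incr_rows f) c f *: \det (rowsub f (@Fnj R t d n j hnj)).

Definition lin_indep (R : nzRingType) (N k : nat) (ps : 'I_k -> {mpoly R[N]})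
  : Prop :=
  forall c : 'I_k -> R, \sum_(i < k) c i *: ps i = 0 -> forall i, c i = 0.

(* Main.v *)
Require Import Defs.
From HB Require Import structures.
From mathcomp Require Import all_boot all_order all_algebra.
From mathcomp Require Import mpoly.
From mathcomp Require Import reals.
From mathcomp Require Import ring.
From mathcomp Require Import fingroup perm zify.

Set Implicit Arguments.
Unset Strict Implicit.
Unset Printing Implicit Defensive.
Import Order.TTheory GRing.Theory Num.Theory.
Local Open Scope ring_scope.


Lemma mnm3_eq (N : nat) (a b c x y z : 'I_N) :
  ((U_(a) + U_(b) + U_(c))%MM == (U_(x) + U_(y) + U_(z))%MM)
  = perm_eq [:: a; b; c] [:: x; y; z].
Proof.
apply/eqP/idP.
- move=> h; apply/allP => i _ /=.
  have := congr1 (fun m : 'X_{1.. N} => m i) h; rewrite !mnmDE !mnm1E /=.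
  by rewrite !addn0 !addnA => ->.
- move=> /seq.permP h; apply/mnmP => i; rewrite !mnmDE !mnm1E.
  by have := h (pred1 i); rewrite /= !addn0 !addnA.
Qed.

Lemma mxvec_index_inj (R : Type) m n (k k' : 'I_m) (l l' : 'I_n) :
  mxvec_index k l = mxvec_index k' l' -> (k = k') /\ (l = l').
Proof.
rewrite /mxvec_index => /cast_ord_inj /enum_rank_inj [-> ->]; by [].
Qed.

Lemma perm3_char (T1 T2 : eqType) (k p q k1 k2 b : T1) (l n j : T2) : n != j ->
  perm_eq [:: (k, l); (p, l); (q, j)] [:: (k1, n); (k2, n); (b, j)]
  = [&& l == n, q == b & ((k == k1) && (p == k2)) || ((k == k2) && (p == k1))].
Proof.
move=> nj; apply/idP/idP.
- move=> h.
  have hl : l = n.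
    have := perm_mem h (k1, n); rewrite !inE !xpair_eqE !eqxx /= ?andbT.
    case/or3P => [/andP[_ /eqP e]|/andP[_ /eqP e]|/andP[_ /eqP e]] //.
    by rewrite e eqxx in nj.
  subst l.
  have hq : q = b.
    have := perm_mem h (b, j); rewrite !inE !xpair_eqE !eqxx /= ?orbT ?andbT.
    case/or3P => [/andP[_ /eqP e]|/andP[_ /eqP e]|/eqP ->] //;
      by rewrite e eqxx in nj.
  subst q; rewrite !eqxx /=.
  move: h; rewrite -[[:: _; _; _]]/([:: (k, n); (p, n)] ++ [:: (b, j)]).
  rewrite -[[:: (k1, n); _; _]]/([:: (k1, n); (k2, n)] ++ [:: (b, j)]).
  rewrite perm_cat2r => h.
  have := perm_mem h (k, n); rewrite !inE !xpair_eqE !eqxx /= ?andbT ?orbT.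
  move/esym; case/orP => /eqP ek.
  + subst k; move: h; rewrite perm_cons => h.
    have := perm_mem h (p, n); rewrite !inE !xpair_eqE !eqxx /= ?andbT.
    by move=> /esym/eqP ->; rewrite !eqxx.
  + subst k.
    have h2 : perm_eq [:: (k2, n); (p, n)] [:: (k2, n); (k1, n)].
      apply: (perm_trans h).
      by rewrite -[[:: (k1, n); _]]/([:: (k1, n)] ++ [:: (k2, n)]) perm_catC.
    move: h2; rewrite perm_cons => h2.
    have := perm_mem h2 (p, n); rewrite !inE !xpair_eqE !eqxx /= ?andbT.
    by move=> /esym/eqP ->; rewrite !eqxx orbT.
- case/and3P => /eqP -> /eqP -> /orP [] /andP [/eqP -> /eqP ->] //.
  rewrite -[[:: (k2, n); _; _]]/([:: (k2, n); (k1, n)] ++ [:: (b, j)]).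
  rewrite -[[:: (k1, n); _; _]]/([:: (k1, n); (k2, n)] ++ [:: (b, j)]).
  by rewrite perm_cat2r -[[:: (k2, n); _]]/([:: (k2, n)] ++ [:: (k1, n)]) perm_catC.
Qed.


Lemma sum_only (I : finType) (R : nmodType) (x : I) (F : I -> R) :
  (forall i, i != x -> F i = 0) -> \sum_i F i = F x.
Proof. by move=> h; rewrite (bigD1 x) //= big1 ?addr0 // => i; apply: h. Qed.

Lemma phiW_expand (R : comNzRingType) a d t (Q K : 'M[R]_(a, d)) V (j : 'I_t) :
  @phiW R a d t Q K V 0 j =
  \sum_(l < t) \sum_(k < d) \sum_(q < d) \sum_(p < d)
    (V 0 k * (K^T *m Q) p q)%:MP *
    'X_[U_(mxvec_index k l) + U_(mxvec_index p l) + U_(mxvec_index q j)].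
Proof.
rewrite /phiW /= !mxE; apply: eq_bigr => l _; rewrite !mxE mulr_suml.
apply: eq_bigr => k _; rewrite !mxE mulr_sumr.
apply: eq_bigr => q _; rewrite !mxE mulr_suml mulr_sumr.
apply: eq_bigr => p _; rewrite !mxE !mpolyXD mpolyCM.
ring.
Qed.

Lemma mon_eq_char d t (k p q k1 k2 b : 'I_d) (l n j : 'I_t) : n != j ->
  ((U_(mxvec_index k l) + U_(mxvec_index p l) + U_(mxvec_index q j))%MM ==
   (U_(mxvec_index k1 n) + U_(mxvec_index k2 n) + U_(mxvec_index b j))%MM)
  = [&& l == n, q == b & ((k == k1) && (p == k2)) || ((k == k2) && (p == k1))].
Proof.
move=> nj; rewrite mnm3_eq -(@perm3_char _ _ k p q k1 k2 b l n j nj).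
have inj : injective (fun x : 'I_d * 'I_t => mxvec_index x.1 x.2).
  by move=> [x1 x2] [y1 y2] /= /(@mxvec_index_inj unit) [-> ->].
apply/idP/idP => h.
- by apply: (perm_map_inj inj).
- by have := perm_map (fun x : 'I_d * 'I_t => mxvec_index x.1 x.2) h.
Qed.

Lemma natr_or (R : pzSemiRingType) (a b : bool) :
  ~~ (a && b) -> ((a || b)%:R : R) = a%:R + b%:R.
Proof. by case: a; case: b => //= _; rewrite ?addr0 ?add0r. Qed.

Lemma sum2_delta (R : pzSemiRingType) d (x y : 'I_d) (F : 'I_d -> 'I_d -> R) :
  \sum_(k < d) \sum_(p < d) F k p * ((k == x) && (p == y))%:R = F x y.
Proof.
rewrite (@sum_only _ _ x) => [|k kx]; last first.
  by apply: big1 => p _; rewrite (negbTE kx) mulr0.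
rewrite (@sum_only _ _ y) => [|p py]; last by rewrite (negbTE py) andbF mulr0.
by rewrite !eqxx mulr1.
Qed.

Lemma coef_c_val (R : comNzRingType) a d t (Q K : 'M[R]_(a, d)) V
    (n j : 'I_t) (m : M2 d) (b : 'I_d) : n != j ->
  @coef_c R a d t Q K V n j m b =
  V 0 (val m).1 * (K^T *m Q) (val m).2 b +
  ((val m).1 != (val m).2)%:R * (V 0 (val m).2 * (K^T *m Q) (val m).1 b).
Proof.
move=> nj; rewrite /coef_c phiW_expand /monAbj.
set k1 := (val m).1; set k2 := (val m).2; set A := K^T *m Q; clearbody k1 k2 A.
rewrite raddf_sum /=.
under eq_bigr => l _ do rewrite raddf_sum /=.
under eq_bigr => l _ do under eq_bigr => k _ do rewrite raddf_sum /=.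
under eq_bigr => l _ do under eq_bigr => k _ do under eq_bigr => q _ do
  rewrite raddf_sum /=.
under eq_bigr => l _ do under eq_bigr => k _ do under eq_bigr => q _ do
  under eq_bigr => p _ do rewrite mcoeffCM mcoeffX mon_eq_char //.
rewrite (@sum_only _ _ n) => [|l ln]; last first.
  by do 3! (apply: big1 => ? _); rewrite (negbTE ln) mulr0.
rewrite eqxx.
transitivity (\sum_(k < d) \sum_(p < d)
   V 0 k * A p b * ((k == k1) && (p == k2) || (k == k2) && (p == k1))%:R).
  apply: eq_bigr => k _; rewrite (@sum_only _ _ b) => [|q qb]; last first.
    by apply: big1 => p _; rewrite (negbTE qb) mulr0.
  by apply: eq_bigr => p _; rewrite eqxx.
have [e12|n12] := eqVneq k1 k2.
- subst k2; under eq_bigr => k _ do under eq_bigr => p _ do rewrite orbb.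
  by rewrite mul0r addr0 sum2_delta.
- transitivity (\sum_(k < d) \sum_(p < d)
   (V 0 k * A p b * ((k == k1) && (p == k2))%:R +
    V 0 k * A p b * ((k == k2) && (p == k1))%:R)).
    apply: eq_bigr => k _; apply: eq_bigr => p _; rewrite -mulrDr natr_or //.
    apply/negP => /andP[/andP[/eqP e1 _] /andP[/eqP e2 _]].
    by rewrite -e1 e2 eqxx in n12.
  under eq_bigr => k _ do rewrite big_split /=.
  rewrite big_split /= !sum2_delta mul1r.
  by congr (_ + _); rewrite mulrA [V 0 k2 * _]mulrC.
Qed.


Lemma coef_y_val (R : fieldType) a d t (Q K : 'M[R]_(a, d)) V
    (n j : 'I_t) (m : M2 d) (b : 'I_d) : n != j -> (2%:R : R) != 0 ->
  @coef_y R a d t Q K V n j m b =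
  (V 0 (val m).1 * (K^T *m Q) (val m).2 b +
   V 0 (val m).2 * (K^T *m Q) (val m).1 b) / 2%:R.
Proof.
move=> nj h2; rewrite /coef_y coef_c_val // /permsz.
case: eqVneq => [e|ne] /=.
- rewrite e mul0r addr0; field; by rewrite h2 oner_neq0.
- by rewrite /= mul1r.
Qed.

Definition kk1 d (r : 'I_#|{: M2 d}|) : 'I_d := (val (enum_val r)).1.
Definition kk2 d (r : 'I_#|{: M2 d}|) : 'I_d := (val (enum_val r)).2.

Definition gc (R : fieldType) d (r : 'I_#|{: M2 d}|) (i l : 'I_d) : R :=
  ((l == kk1 r)%:R * (kk2 r == i)%:R + (l == kk2 r)%:R * (kk1 r == i)%:R) / 2%:R.
Arguments gc {R d}.

Definition Gm (R : fieldType) d (V : 'rV[R]_d) : 'M[R]_(#|{: M2 d}|, d) :=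
  \matrix_(r, i) \sum_(l < d) gc r i l * V 0 l.

Lemma sum_delta1 (R : pzSemiRingType) d (x : 'I_d) (F : 'I_d -> R) :
  \sum_(l < d) (l == x)%:R * F l = F x.
Proof.
rewrite (@sum_only _ _ x) ?eqxx ?mul1r // => l lx.
by rewrite (negbTE lx) mul0r.
Qed.

Lemma GmA (R : fieldType) d (V : 'rV[R]_d) (A : 'M[R]_d) r b :
  (Gm V *m A) r b = (V 0 (kk1 r) * A (kk2 r) b + V 0 (kk2 r) * A (kk1 r) b) / 2%:R.
Proof.
rewrite !mxE.
transitivity (\sum_(i < d) ((i == kk2 r)%:R * (V 0 (kk1 r) * A i b / 2%:R) +
                          (i == kk1 r)%:R * (V 0 (kk2 r) * A i b / 2%:R))).
  apply: eq_bigr => i _; rewrite !mxE.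
  transitivity ((\sum_(l < d) ((l == kk1 r)%:R * ((kk2 r == i)%:R * V 0 l / 2%:R) +
                 (l == kk2 r)%:R * ((kk1 r == i)%:R * V 0 l / 2%:R))) * A i b).
    by congr (_ * _); apply: eq_bigr => l _; rewrite /gc; ring.
  rewrite big_split /= !sum_delta1 [kk2 r == i]eq_sym [kk1 r == i]eq_sym; ring.
by rewrite big_split /= !sum_delta1; ring.
Qed.

Definition kap (R : fieldType) d D (f : {ffun 'I_d -> 'I_D})
    (g : 'I_D -> 'I_d -> 'I_d -> R) (L : {ffun 'I_d -> 'I_d}) : R :=
  \sum_(s : 'S_d) (-1) ^+ s * \prod_(i < d) g (f i) (s i) (L i).

Lemma det_expand (R : fieldType) d D (f : {ffun 'I_d -> 'I_D})
    (g : 'I_D -> 'I_d -> 'I_d -> R) (V : 'rV[R]_d) :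
  \det (rowsub f (\matrix_(r, i) \sum_(l < d) g r i l * V 0 l)) =
  \sum_(L : {ffun 'I_d -> 'I_d}) kap f g L * \prod_(i < d) V 0 (L i).
Proof.
rewrite /determinant.
under eq_bigr => s _ do under eq_bigr => i _ do rewrite !mxE.
under eq_bigr => s _ do rewrite bigA_distr_bigA mulr_sumr.
rewrite exchange_big /=; apply: eq_bigr => L _.
rewrite /kap mulr_suml; apply: eq_bigr => s _.
by rewrite big_split /= mulrA.
Qed.

Definition Sd d := {t : d.-tuple 'I_d | sorted leq (map val t)}.
HB.instance Definition _ d := Finite.on (Sd d).

Definition leT d : rel 'I_d := fun x y => (x <= y)%N.

Lemma sort_sortedP d (L : {ffun 'I_d -> 'I_d}) :
  sorted leq (map val (sort_tuple (@leT d) [tuple L i | i < d])).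
Proof. by rewrite sorted_map; apply: sort_sorted => x y; exact: leq_total. Qed.

Definition piL d (L : {ffun 'I_d -> 'I_d}) : Sd d :=
  exist _ (sort_tuple (@leT d) [tuple L i | i < d]) (sort_sortedP L).

Definition monS (R : fieldType) d (V : 'rV[R]_d) (t : Sd d) : R :=
  \prod_(i < d) V 0 (tnth (val t) i).

Lemma prodV_piL (R : fieldType) d (V : 'rV[R]_d) (L : {ffun 'I_d -> 'I_d}) :
  \prod_(i < d) V 0 (L i) = monS V (piL L).
Proof.
rewrite /monS /piL /=.
set t := [tuple L i | i < d].
transitivity (\prod_(x <- t) V 0 x).
  by rewrite big_tuple; apply: eq_bigr => i _; rewrite tnth_mktuple.
transitivity (\prod_(x <- sort (@leT d) t) V 0 x).
  by apply: perm_big; rewrite perm_sym perm_sort perm_refl.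
by rewrite -[LHS]/(\prod_(x <- sort_tuple (@leT d) t) V 0 x) big_tuple.
Qed.

Definition Td d := {f : {ffun 'I_d -> 'I_#|{: M2 d}|} | incr_rows f}.
HB.instance Definition _ d := Finite.on (Td d).

Definition Kmat (R : fieldType) d : 'M[R]_(#|{: Td d}|, #|{: Sd d}|) :=
  \matrix_(u, w) \sum_(L | enum_rank (piL L) == w) kap (val (enum_val u)) gc L.

Lemma det_Gm_K (R : fieldType) d (V : 'rV[R]_d) (u : 'I_#|{: Td d}|) :
  \det (rowsub (val (enum_val u)) (Gm V)) =
  \sum_(w < #|{: Sd d}|) Kmat R d u w * monS V (enum_val w).
Proof.
rewrite /Gm det_expand.
rewrite (partition_big (fun L => enum_rank (piL L)) predT) //=.
apply: eq_bigr => w _; rewrite mxE mulr_suml; apply: eq_bigr => L /eqP <-.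
by rewrite prodV_piL enum_rankK.
Qed.

Lemma comb_vanish (R : fieldType) d (V : 'rV[R]_d) (c : 'rV[R]_#|{: Td d}|) :
  c *m Kmat R d = 0 ->
  \sum_(u < #|{: Td d}|) c 0 u * \det (rowsub (val (enum_val u)) (Gm V)) = 0.
Proof.
move=> cK.
under eq_bigr => u _ do rewrite det_Gm_K mulr_sumr.
rewrite exchange_big /=; apply: big1 => w _.
rewrite (eq_bigr (fun u => c 0 u * Kmat R d u w * monS V (enum_val w))); last first.
  by move=> u _; rewrite mulrA.
have := congr1 (fun M : 'rV[R]__ => M 0 w) cK; rewrite !mxE => e.
by rewrite -mulr_suml e mul0r.
Qed.


Lemma card_Sd d : (0 < d)%N -> #|{: Sd d}| = 'C(2 * d - 1, d).
Proof.
case: d => // n _.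
have -> : (2 * n.+1 - 1 = n.+1 + n)%N.
  by lia.
by rewrite card_sig -cardsE card_sorted_tuples.
Qed.

Definition S2 n := {t : 2.-tuple 'I_n | sorted leq (map val t)}.
HB.instance Definition _ n := Finite.on (S2 n).

Lemma M2_S2P d (p : M2 d) : sorted leq (map val [tuple (val p).1; (val p).2]).
Proof. by rewrite /= andbT; exact: (valP p). Qed.

Definition M2_S2 d (p : M2 d) : S2 d :=
  exist (fun t : 2.-tuple 'I_d => sorted leq (map val t)) _ (M2_S2P p).

Lemma S2_M2P d (t : S2 d) : ((tnth (val t) ord0) <= (tnth (val t) (lift ord0 ord0)))%N.
Proof.
case: t => t /=; case/tupleP: t => x t; case/tupleP: t => y t.
by rewrite tuple0 /= andbT.
Qed.

Definition S2_M2 d (t : S2 d) : M2 d :=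
  exist (fun p : 'I_d * 'I_d => (p.1 <= p.2)%N) (_, _) (S2_M2P t).

Lemma card_M2 d : #|{: M2 d}| = 'C(d.+1, 2).
Proof.
rewrite (@bij_eq_card _ _ (@M2_S2 d)); last first.
  exists (@S2_M2 d).
  - by move=> [[x y] h]; apply: val_inj.
  - move=> [t h]; apply: val_inj => /=; apply: eq_from_tnth => i.
    case/tupleP: t h => x t; case/tupleP: t => y t; rewrite tuple0 => h.
    by case: i => [[|[|]]] //= ?; rewrite !(tnth_nth x).
case: d => [|n]; last first.
  by rewrite card_sig -cardsE card_sorted_tuples add2n.
rewrite bin_small // card_sig; apply: eq_card0 => t.
by case/tupleP: t => [[]].
Qed.

Definition Lt d D := {t : d.-tuple 'I_D | sorted ltn (map val t)}.
HB.instance Definition _ d D := Finite.on (Lt d D).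

Lemma Lt_incr d D (t : Lt d D) : incr_rows [ffun i => tnth (val t) i].
Proof.
apply/forallP => i1; apply/forallP => i2; apply/implyP => lt; rewrite !ffunE.
case: t => t /= st.
have := @sorted_ltn_nth _ ltn ltn_trans 0%N _ st i1 i2.
rewrite !inE size_map size_tuple !ltn_ord => /(_ isT isT lt).
rewrite !(nth_map (tnth t i1)) ?size_tuple ?ltn_ord //.
by rewrite -!tnth_nth.
Qed.

Definition Lt_Td d (t : Lt d #|{: M2 d}|) : Td d :=
  exist (fun f => incr_rows f) _ (Lt_incr t).

Lemma card_Td d : ('C(#|{: M2 d}|, d) <= #|{: Td d}|)%N.
Proof.
rewrite -card_ltn_sorted_tuples cardsE -card_sig.
apply: (@leq_card _ _ (@Lt_Td d)) => [[t1 h1] [t2 h2]] /(congr1 val) /= e.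
apply: val_inj; apply: eq_from_tnth => i /=.
by have := congr1 (fun f : {ffun _ -> _} => f i) e; rewrite !ffunE.
Qed.


Definition ltO D : rel 'I_D := fun x y => (x < y)%N.

Lemma incr_sorted d D (f : {ffun 'I_d -> 'I_D}) :
  incr_rows f -> sorted (@ltO D) (map f (enum 'I_d)).
Proof.
move=> /forallP hf; rewrite sorted_map.
have : sorted (relpre val ltn) (enum 'I_d).
  by rewrite -sorted_map val_enum_ord iota_ltn_sorted.
apply: sub_sorted => i1 i2 /= lt.
by have := hf i1 => /forallP /(_ i2) /implyP /(_ lt).
Qed.

Lemma incr_inj d D (f : {ffun 'I_d -> 'I_D}) : incr_rows f -> injective f.
Proof.
move=> /forallP hf i1 i2 e; apply: val_inj; case: (ltngtP i1 i2) => // lt.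
- have := hf i1 => /forallP /(_ i2) /implyP /(_ lt).
  by rewrite e ltnn.
- have := hf i2 => /forallP /(_ i1) /implyP /(_ lt).
  by rewrite e ltnn.
Qed.

Lemma incr_eq d D (f g : {ffun 'I_d -> 'I_D}) : incr_rows f -> incr_rows g ->
  (forall i, exists k, f i = g k) -> f = g.
Proof.
move=> hf hg hfg.
have tr : transitive (@ltO D) by move=> x y z; exact: ltn_trans.
have irr : irreflexive (@ltO D) by move=> x; exact: ltnn.
have sf := incr_sorted hf; have sg := incr_sorted hg.
have sub : {subset map f (enum 'I_d) <= map g (enum 'I_d)}.
  move=> x /mapP [i _ ->]; have [k ->] := hfg i.
  by apply: map_f; rewrite mem_enum.
have [_ eqm] : ((size (map f (enum 'I_d)) = size (map g (enum 'I_d))) *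
    (map f (enum 'I_d) =i map g (enum 'I_d)))%type.
  by apply: uniq_min_size (sorted_uniq tr irr sf) sub _; rewrite !size_map.
have e := irr_sorted_eq tr irr sf sg eqm.
apply/ffunP => i.
have := congr1 (fun s => nth (f i) s i) e.
rewrite !(nth_map i) ?size_enum_ord ?ltn_ord // ?nth_ord_enum //.
all: rewrite -enumT ?nth_ord_enum ?size_enum_ord //.
Qed.

Lemma minor_eval (R : comNzRingType) d D (f g : {ffun 'I_d -> 'I_D}) :
  incr_rows f -> incr_rows g ->
  \det (rowsub f (\matrix_(r, k) ((r == g k)%:R : R))) = (f == g)%:R.
Proof.
move=> hf hg; have [<-|ne] := eqVneq f g.
- have -> : rowsub f (\matrix_(r, k) ((r == f k)%:R : R)) = 1%:M.
    apply/matrixP => i k; rewrite !mxE (inj_eq (incr_inj hf)).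
    by case: (i == k).
  by rewrite det1.
- have /existsP [i0 /forallP hi0] : [exists i0, [forall k, f i0 != g k]].
    move: ne; apply: contraR => /existsPn h; apply/eqP.
    apply: incr_eq => // i; have /forallPn [k /negPn /eqP e] := h i.
    by exists k.
  rewrite (expand_det_row _ i0) big1 // => k _.
  by rewrite !mxE (negbTE (hi0 k)) mul0r.
Qed.

Lemma sum_Td (M : nmodType) d (G : {ffun 'I_d -> 'I_#|{: M2 d}|} -> M) :
  \sum_(f | incr_rows f) G f = \sum_(u < #|{: Td d}|) G (val (enum_val u)).
Proof.
rewrite (reindex_omap (val : Td d -> _) insub) /=; last first.
  by move=> f hf; rewrite insubT.
rewrite (eq_bigl predT); last by move=> x; rewrite (valP x) valK eqxx.
apply: (reindex (@enum_val (Td d) predT)); apply: onW_bij; exact: enum_val_bij.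
Qed.

Lemma prod_homog (R : comNzRingType) N k (F : 'I_k -> {mpoly R[N]}) :
  (forall i, F i \is 1.-homog) -> \prod_(i < k) F i \is k.-homog.
Proof.
elim: k F => [|k IH] F hF; first by rewrite big_ord0 dhomog1.
rewrite big_ord_recr /=.
have h := dhomogM (IH (fun i => F (widen_ord (leqnSn k) i)) (fun i => hF _)) (hF ord_max).
by rewrite addn1 in h.
Qed.

Lemma det_homog (R : comNzRingType) N d (M : 'M[{mpoly R[N]}]_d) :
  (forall i k, M i k \is 1.-homog) -> \det M \is d.-homog.
Proof.
move=> hM; rewrite /determinant; apply: rpred_sum => s _.
have hp : \prod_(i < d) M i (s i) \is d.-homog by apply: prod_homog.
by case: (odd_perm s); rewrite ?expr1 ?expr0 ?mulN1r ?mul1r ?rpredN.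
Qed.


Definition zpt (R : fieldType) t d (n j : 'I_t) (g : {ffun 'I_d -> 'I_#|{: M2 d}|})
  (v : 'I_(NV t d)) : R :=
  let x := val (enum_val v) in ((x.1 == (n, j)) && (enum_rank x.2.1 == g x.2.2))%:R.

Lemma eval_zpt (R : fieldType) t d (n j : 'I_t) (hnj : n != j)
    (g f : {ffun 'I_d -> 'I_#|{: M2 d}|}) :
  map_mx (meval (zpt R n j g)) (rowsub f (@Fnj R t d n j hnj)) =
  rowsub f (\matrix_(r, k) ((r == g k)%:R : R)).
Proof.
apply/matrixP => r k; rewrite !mxE /ycoord mevalXU /zpt enum_rankK /=.
by rewrite eqxx enum_valK.
Qed.

Lemma eval_mu (R : realType) a t d (n j : 'I_t) (hnj : n != j)
    (Q K : 'M[R]_(a, d)) (V : 'rV[R]_d) (f : {ffun 'I_d -> 'I_#|{: M2 d}|}) :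
  map_mx (meval (mu Q K V)) (rowsub f (@Fnj R t d n j hnj)) =
  rowsub f (Gm V *m (K^T *m Q)).
Proof.
apply/matrixP => r k; rewrite !mxE /ycoord mevalXU /mu enum_rankK /=.
rewrite coef_y_val // ?pnatr_eq0 //.
by rewrite -(GmA V (K^T *m Q) (f r) k) !mxE.
Qed.

Unset Implicit Arguments.

Theorem mainTheorem11 (R : realType) (d a t : nat)
    (hd : (2 <= d)%N) (hda : (d <= a)%N) (ht : (2 <= t)%N)
    (n j : 'I_t) (hnj : n != j) :
  exists ps : 'I_('C('C(d.+1, 2), d) - 'C(2 * d - 1, d)) -> {mpoly R[NV t d]},
    lin_indep ps /\
    forall i, [/\ ps i \is d.-homog,
                  in_span_of_max_minors hnj (ps i) &
                  vanishes_on_attention_variety a (ps i)].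
Proof.
set k := ('C('C(d.+1, 2), d) - 'C(2 * d - 1, d))%N.
set KK := Kmat R d.
have hkr : (k <= \rank (kermx KK))%N.
  rewrite mxrank_ker.
  have h1 := rank_leq_col KK.
  have h2 := card_Td d; rewrite card_M2 in h2.
  have h3 : #|{: Sd d}| = 'C(2 * d - 1, d) by apply: card_Sd; lia.
  rewrite /k; lia.
pose B := row_base (kermx KK).
pose P : 'M[R]_(k, \rank (kermx KK)) := \matrix_(i, l) ((widen_ord hkr i == l)%:R).
pose B' := P *m B.
have hBK : B' *m KK = 0.
  have : (B <= kermx KK)%MS by rewrite /B eq_row_base.
  by rewrite sub_kermx => /eqP e; rewrite /B' -mulmxA e mulmx0.
have hB'i : forall (c : 'rV[R]_k), c *m B' = 0 -> c = 0.
  move=> c; rewrite /B' mulmxA => /eqP; rewrite mulmx_free_eq0 ?row_base_free //.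
  move=> /eqP cP; apply/rowP => i.
  have winj : injective (widen_ord hkr) by move=> x y /(congr1 val) /= e; apply: val_inj.
  have := congr1 (fun M : 'rV[R]__ => M 0 (widen_ord hkr i)) cP.
  rewrite !mxE (@sum_only _ _ i) => [|l li]; last first.
    by rewrite !mxE (inj_eq winj) (negbTE li) mulr0.
  by rewrite !mxE eqxx mulr1.
pose cc (i : 'I_k) (f : {ffun 'I_d -> 'I_#|{: M2 d}|}) : R :=
  oapp (fun f' : Td d => B' i (enum_rank f')) 0 (insub f).
have ccE : forall i u, cc i (val (enum_val u)) = B' i u.
  by move=> i u; rewrite /cc valK /= enum_valK.
exists (fun i => \sum_(f | incr_rows f) cc i f *: \det (rowsub f (@Fnj R t d n j hnj))).
split.
- move=> c hc i0.
  pose av : 'rV[R]_k := \row_i c i.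
  suff : av = 0 by move/rowP/(_ i0); rewrite !mxE.
  apply: hB'i; apply/rowP => u; rewrite !mxE.
  have := congr1 (meval (zpt R n j (val (enum_val u)))) hc.
  rewrite raddf_sum meval0 /= => e; rewrite -[RHS]e; apply: eq_bigr => i _.
  rewrite mevalZ raddf_sum /= mxE; congr (_ * _).
  under eq_bigr => f hf do rewrite mevalZ -det_map_mx eval_zpt (minor_eval _ hf (valP _)).
  rewrite sum_Td (@sum_only _ _ u) => [|u' uu]; last first.
    by rewrite val_eqE (inj_eq enum_val_inj) (negbTE uu) mulr0.
  by rewrite eqxx mulr1; symmetry; exact: ccE.
- move=> i; split.
  + apply: rpred_sum => f _; apply: rpredZ; apply: det_homog => r l.
    by rewrite !mxE /ycoord dhomogX; apply/eqP; exact: mpoly.mdeg1.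
  + by exists (cc i).
  + move=> z hz; apply: hz => Q K V.
    rewrite raddf_sum /=.
    under eq_bigr => f _ do rewrite mevalZ -det_map_mx eval_mu -mul_rowsub_mx det_mulmx mulrA.
    rewrite -mulr_suml sum_Td.
    rewrite (eq_bigr (fun u => (row i B') 0 u * \det (rowsub (val (enum_val u)) (Gm V))));
      last by move=> u _; congr (_ * _); rewrite mxE; exact: ccE.
    by rewrite comb_vanish ?mul0r // -row_mul hBK row0.
Qed.
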